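(* Let $h$ be a snowflaking function and let $(X,d)$ be a metric space. If the metric space $(X,h\circ d)$ admits an isometric embedding into some finite-dimensional normed linear (Banach) space, then $X$ is finite.
   Context: Let $\mathbb R_{\geq}=[0,\infty)$. A function $h:\mathbb R_{\geq}\to\mathbb R_{\geq}$ is called a snowflaking function if: (S1) $h(0)=0$; (S2) $h$ is concave; (S3) $h(t)/t\to\infty$ as $t\to0^+$; (S4) $h(t)/t\to 0$ as $t\to\infty$. For such $h$ and a metric $d$ on $X$, $h\circ d$ is again a metric on $X$; $(X,h\circ d)$ is called the $h$-snowflake of $(X,d)$. *)

(* Defs.v *)
From Stdlib Require Import Reals Lra List.
Open Scope R_scope.

(* ---------- Snowflaking functions (h : [0,oo) -> [0,oo), modelled on R) ---------- *)
Definition snowflaking (h : R -> R) : Prop :=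
  (forall t, 0 <= t -> 0 <= h t) /\
  h 0 = 0 /\
  (forall x y l, 0 <= x -> 0 <= y -> 0 <= l <= 1 ->
     l * h x + (1 - l) * h y <= h (l * x + (1 - l) * y)) /\
  (forall M, exists delta, 0 < delta /\
     forall t, 0 < t < delta -> M < h t / t) /\
  (forall eps, 0 < eps -> exists T,
     forall t, T < t -> Rabs (h t / t) < eps).

Definition is_metric (X : Type) (d : X -> X -> R) : Prop :=
  (forall x y, 0 <= d x y) /\
  (forall x y, d x y = 0 <-> x = y) /\
  (forall x y, d x y = d y x) /\
  (forall x y z, d x z <= d x y + d y z).

Record NormedSpace := {
  ns_car :> Type;
  ns_zero : ns_car;
  ns_add : ns_car -> ns_car -> ns_car;
  ns_opp : ns_car -> ns_car;
  ns_scal : R -> ns_car -> ns_car;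
  ns_norm : ns_car -> R;
  ns_add_assoc : forall u v w, ns_add u (ns_add v w) = ns_add (ns_add u v) w;
  ns_add_comm : forall u v, ns_add u v = ns_add v u;
  ns_add_zero : forall u, ns_add u ns_zero = u;
  ns_add_opp : forall u, ns_add u (ns_opp u) = ns_zero;
  ns_scal_one : forall u, ns_scal 1 u = u;
  ns_scal_assoc : forall a b u, ns_scal a (ns_scal b u) = ns_scal (a * b) u;
  ns_scal_distr_l : forall a u v, ns_scal a (ns_add u v) = ns_add (ns_scal a u) (ns_scal a v);
  ns_scal_distr_r : forall a b u, ns_scal (a + b) u = ns_add (ns_scal a u) (ns_scal b u);
  ns_norm_nonneg : forall u, 0 <= ns_norm u;
  ns_norm_eq0 : forall u, ns_norm u = 0 -> u = ns_zero;
  ns_norm_scal : forall a u, ns_norm (ns_scal a u) = Rabs a * ns_norm u;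
  ns_norm_triangle : forall u v, ns_norm (ns_add u v) <= ns_norm u + ns_norm v
}.

Fixpoint lin_comb (V : NormedSpace) (n : nat) (c : nat -> R) (e : nat -> V) : V :=
  match n with
  | O => ns_zero V
  | S m => ns_add V (lin_comb V m c e) (ns_scal V (c m) (e m))
  end.

Definition finite_dimensional (V : NormedSpace) : Prop :=
  exists (n : nat) (e : nat -> V), forall v : V, exists c : nat -> R, v = lin_comb V n c e.

Definition isometric_embedding (X : Type) (dX : X -> X -> R) (V : NormedSpace) (f : X -> V) : Prop :=
  forall x y, ns_norm V (ns_add V (f x) (ns_opp V (f y))) = dX x y.

Definition finite_type (X : Type) : Prop := exists l : list X, forall x, In x l.

(* Main.v *)
Require Import Defs.
From Stdlib Require Import Reals Lra Lia List Classical ClassicalEpsilon Rtopology.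
Open Scope R_scope.

Arguments ns_zero {n}.
Arguments ns_add {n}.
Arguments ns_opp {n}.
Arguments ns_scal {n}.
Arguments ns_norm {n}.

Definition vsub {V : NormedSpace} (u v : V) : V := ns_add u (ns_opp v).

Lemma add0l (V : NormedSpace) (u : V) : ns_add ns_zero u = u.
Proof. rewrite ns_add_comm. apply ns_add_zero. Qed.

Lemma add_cancel (V : NormedSpace) (u v w : V) : ns_add u v = ns_add u w -> v = w.
Proof.
  intro H. assert (H2 : ns_add (ns_opp u) (ns_add u v) = ns_add (ns_opp u) (ns_add u w)) by now rewrite H.
  rewrite !ns_add_assoc in H2. rewrite (ns_add_comm _ (ns_opp u) u), ns_add_opp, !add0l in H2. exact H2.
Qed.

Lemma scal0 (V : NormedSpace) (u : V) : ns_scal 0 u = ns_zero.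
Proof.
  apply (add_cancel V (ns_scal 0 u)). rewrite ns_add_zero, <- ns_scal_distr_r.
  now rewrite Rplus_0_r.
Qed.

Lemma opp_scal (V : NormedSpace) (u : V) : ns_opp u = ns_scal (-1) u.
Proof.
  apply (add_cancel V u). rewrite ns_add_opp.
  assert (H : ns_add (ns_scal 1 u) (ns_scal (-1) u) = ns_scal 0 u).
  { rewrite <- ns_scal_distr_r. f_equal. ring. }
  rewrite ns_scal_one, scal0 in H. auto.
Qed.

Lemma scal_zero (V : NormedSpace) (a : R) : ns_scal a (@ns_zero V) = ns_zero.
Proof. rewrite <- (scal0 V ns_zero), ns_scal_assoc. now rewrite Rmult_0_r. Qed.

Lemma norm0 (V : NormedSpace) : ns_norm (@ns_zero V) = 0.
Proof. rewrite <- (scal0 V ns_zero), ns_norm_scal, Rabs_R0. ring. Qed.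

Lemma norm_opp (V : NormedSpace) (u : V) : ns_norm (ns_opp u) = ns_norm u.
Proof. rewrite opp_scal, ns_norm_scal, Rabs_left by lra. ring. Qed.

Lemma opp_add (V : NormedSpace) (u v : V) : ns_opp (ns_add u v) = ns_add (ns_opp u) (ns_opp v).
Proof. rewrite !opp_scal. apply ns_scal_distr_l. Qed.

Lemma opp_opp (V : NormedSpace) (u : V) : ns_opp (ns_opp u) = u.
Proof. rewrite !opp_scal, ns_scal_assoc. replace (-1 * -1) with 1 by ring. apply ns_scal_one. Qed.

Lemma add_swap4 (V : NormedSpace) (a b c d : V) :
  ns_add (ns_add a b) (ns_add c d) = ns_add (ns_add a c) (ns_add b d).
Proof.
  rewrite !ns_add_assoc. f_equal. rewrite <- !ns_add_assoc. f_equal. apply ns_add_comm.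
Qed.

Lemma vsub_self (V : NormedSpace) (u : V) : vsub u u = ns_zero.
Proof. apply ns_add_opp. Qed.

Lemma vsub_opp (V : NormedSpace) (u v : V) : ns_opp (vsub u v) = vsub v u.
Proof. unfold vsub. rewrite opp_add, opp_opp. apply ns_add_comm. Qed.

Lemma norm_vsub_sym (V : NormedSpace) (u v : V) : ns_norm (vsub u v) = ns_norm (vsub v u).
Proof. rewrite <- vsub_opp. apply norm_opp. Qed.

Lemma vsub_split (V : NormedSpace) (u v w : V) : vsub u w = ns_add (vsub u v) (vsub v w).
Proof.
  unfold vsub. rewrite ns_add_assoc, <- (ns_add_assoc _ u (ns_opp v) v), (ns_add_comm _ (ns_opp v) v), ns_add_opp, ns_add_zero.
  reflexivity.
Qed.

Lemma vdist_tri (V : NormedSpace) (u v w : V) :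
  ns_norm (vsub u w) <= ns_norm (vsub u v) + ns_norm (vsub v w).
Proof. rewrite (vsub_split V u v w). apply ns_norm_triangle. Qed.

Lemma vsub_eq0 (V : NormedSpace) (u v : V) : ns_norm (vsub u v) = 0 -> u = v.
Proof.
  intro H. apply ns_norm_eq0 in H. unfold vsub in H.
  rewrite <- (ns_add_zero V u), <- (ns_add_opp V v), (ns_add_comm _ v), ns_add_assoc, H. apply add0l.
Qed.

Lemma vsub_sub (V : NormedSpace) (a b p : V) : vsub (vsub a p) (vsub b p) = vsub a b.
Proof.
  unfold vsub. rewrite opp_add, opp_opp. rewrite add_swap4.
  rewrite (ns_add_comm _ (ns_opp p) p), ns_add_opp, ns_add_zero. reflexivity.
Qed.

Lemma scal_sub_l (V : NormedSpace) (a b : R) (u : V) : vsub (ns_scal a u) (ns_scal b u) = ns_scal (a - b) u.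
Proof. unfold vsub. rewrite opp_scal, ns_scal_assoc, <- ns_scal_distr_r. f_equal. ring. Qed.

Lemma scal_sub_r (V : NormedSpace) (r : R) (u w : V) : vsub (ns_scal r u) (ns_scal r w) = ns_scal r (vsub u w).
Proof. unfold vsub. rewrite ns_scal_distr_l, !opp_scal, !ns_scal_assoc. f_equal. f_equal. ring. Qed.

Lemma scal_inv (V : NormedSpace) (r : R) (w : V) : r <> 0 -> ns_scal r (ns_scal (/ r) w) = w.
Proof. intro. rewrite ns_scal_assoc, Rinv_r by auto. apply ns_scal_one. Qed.

Lemma norm_ge_rev (V : NormedSpace) (u w p : V) :
  ns_norm (vsub u p) - ns_norm (vsub w p) <= ns_norm (vsub u w).
Proof. pose proof (vdist_tri V u w p). lra. Qed.

Lemma dir_est (V : NormedSpace) (ra rb : R) (ua ub : V) :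
  ns_norm ua = 1 -> 0 <= rb <= ra ->
  ns_norm (vsub (ns_scal ra ua) (ns_scal rb ub)) <= (ra - rb) + rb * ns_norm (vsub ua ub).
Proof.
  intros H1 [H2 H3].
  pose proof (vdist_tri V (ns_scal ra ua) (ns_scal rb ua) (ns_scal rb ub)).
  rewrite scal_sub_l, scal_sub_r, !ns_norm_scal, H1 in H.
  rewrite (Rabs_right (ra - rb)), (Rabs_right rb) in H by lra. lra.
Qed.

Lemma Rdiv_le_0_compat a b : 0 <= a -> 0 < b -> 0 <= a / b.
Proof. intros. unfold Rdiv. apply Rmult_le_pos; [auto|]. left. apply Rinv_0_lt_compat; auto. Qed.

Lemma conc3 (h : R -> R) : snowflaking h -> forall a b c, 0 <= a -> a < b -> b < c ->
  (c - b) * h a + (b - a) * h c <= (c - a) * h b.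
Proof.
  intros [Hnn [H0 [Hc _]]] a b c Ha Hab Hbc.
  set (l := (c - b) / (c - a)).
  assert (Hl : 0 <= l <= 1).
  { unfold l; split. apply Rdiv_le_0_compat; lra.
    apply (Rmult_le_reg_r (c - a)); [lra|]. unfold Rdiv. rewrite Rmult_assoc, Rinv_l by lra. lra. }
  pose proof (Hc a c l Ha ltac:(lra) Hl) as H.
  replace (l * a + (1 - l) * c) with b in H by (unfold l; field; lra).
  apply (Rmult_le_compat_l (c - a)) in H; [|lra].
  replace ((c - a) * (l * h a + (1 - l) * h c)) with ((c - b) * h a + (b - a) * h c) in H
    by (unfold l; field; lra).
  exact H.
Qed.

Lemma h_mono (h : R -> R) : snowflaking h -> forall s t, 0 <= s -> s <= t -> h s <= h t.
Proof.
  intros Hs s t Hs0 Hst. pose proof Hs as [Hnn _].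
  destruct (Rle_lt_dec (h s) (h t)) as [|Hlt]; auto.
  destruct (Req_dec s t) as [->|Hne]; [lra|].
  set (T := t + (t - s) * h t / (h s - h t) + 1).
  assert (Hd : 0 < h s - h t) by lra.
  assert (HT : t < T).
  { unfold T. assert (0 <= (t - s) * h t / (h s - h t)).
    { apply Rdiv_le_0_compat; [apply Rmult_le_pos; [lra| apply Hnn; lra]|lra]. } lra. }
  pose proof (conc3 h Hs s t T Hs0 ltac:(lra) HT) as Hq.
  pose proof (Hnn T ltac:(lra)) as HhT.
  assert (H2 : (T - t) * (h s - h t) <= (t - s) * h t) by nra.
  assert (H3 : (T - t) * (h s - h t) = (t - s) * h t + (h s - h t)) by (unfold T; field; lra).
  lra.
Qed.

Lemma h_ratio (h : R -> R) : snowflaking h -> forall s t, 0 < s -> s <= t -> s * h t <= t * h s.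
Proof.
  intros Hs s t Hs0 Hst. destruct (Req_dec s t) as [->|Hne]; [lra|].
  pose proof (conc3 h Hs 0 s t ltac:(lra) Hs0 ltac:(lra)) as H.
  destruct Hs as [_ [H0 _]]. rewrite H0 in H. lra.
Qed.

Lemma h_ratio_div (h : R -> R) : snowflaking h -> forall s t, 0 < s -> s <= t -> h t / t <= h s / s.
Proof.
  intros Hs s t Hs0 Hst. pose proof (h_ratio h Hs s t Hs0 Hst).
  apply (Rmult_le_reg_r (s * t)); [nra|]. field_simplify; [|lra|lra]. lra.
Qed.

Lemma h_chord (h : R -> R) : snowflaking h -> forall s t, 0 < s -> 0 <= t ->
  h (s + t) <= h s + t * (h s / s).
Proof.
  intros Hs s t Hs0 Ht. pose proof (h_ratio h Hs s (s + t) Hs0 ltac:(lra)).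
  apply (Rmult_le_reg_l s); [lra|]. field_simplify; [|lra]. lra.
Qed.

Lemma h_pos (h : R -> R) : snowflaking h -> forall t, 0 < t -> 0 < h t.
Proof.
  intros Hs t Ht. pose proof Hs as [_ [_ [_ [H3 _]]]].
  destruct (H3 0) as [dl [Hdl Hd]].
  set (t' := Rmin t (dl / 2)).
  assert (Ht' : 0 < t' < dl) by (unfold t'; unfold Rmin; destruct Rle_dec; lra).
  specialize (Hd t' Ht').
  assert (0 < h t').
  { unfold Rdiv in Hd. apply (Rmult_lt_reg_r (/ t')). apply Rinv_0_lt_compat; lra. lra. }
  pose proof (h_mono h Hs t' t ltac:(lra) ltac:(unfold t', Rmin; destruct Rle_dec; lra)). lra.
Qed.

Definition sincr (phi : nat -> nat) := forall k, (phi k < phi (S k))%nat.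

Lemma sincr_ge phi : sincr phi -> forall k, (k <= phi k)%nat.
Proof. intros H k. induction k. lia. specialize (H k). lia. Qed.

Lemma sincr_mono phi : sincr phi -> forall k k', (k < k')%nat -> (phi k < phi k')%nat.
Proof.
  intros H k k' Hk. induction Hk. apply H. specialize (H m). lia.
Qed.

Lemma sincr_comp phi psi : sincr phi -> sincr psi -> sincr (fun k => phi (psi k)).
Proof. intros H1 H2 k. apply sincr_mono; auto. Qed.

Fixpoint build (g : nat -> nat -> nat) (k : nat) : nat :=
  match k with O => g O O | S k' => g (S (build g k')) k end.

Lemma inv_small (eps : R) : 0 < eps -> exists N, / INR (S N) < eps.
Proof.
  intro He. destruct (INR_archimed eps 1 He) as [n Hn].
  exists n. rewrite S_INR. pose proof (pos_INR n).
  apply (Rmult_lt_reg_r (INR n + 1)); [lra|]. rewrite Rinv_l by lra. nra.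
Qed.

Lemma inv_mono (k N : nat) : (N <= k)%nat -> / INR (S k) <= / INR (S N).
Proof.
  intro H. apply Rinv_le_contravar. apply lt_0_INR; lia. apply le_INR; lia.
Qed.

Lemma cluster_sub (T : Type) (dist : T -> R) (a : nat -> T) :
  (forall eps, 0 < eps -> forall N, exists p, (N <= p)%nat /\ dist (a p) < eps) ->
  exists phi, sincr phi /\ forall eps, 0 < eps -> exists N, forall k, (N <= k)%nat -> dist (a (phi k)) < eps.
Proof.
  intro H.
  assert (H' : forall z : nat * nat, exists p, (fst z <= p)%nat /\ dist (a p) < / INR (S (snd z))).
  { intros [N k]. apply H. apply Rinv_0_lt_compat, lt_0_INR; lia. }
  apply choice in H' as [g Hg].
  exists (build (fun N k => g (N, k))). split.
  - intro k. simpl. specialize (Hg (S (build (fun N k => g (N, k)) k), S k)). simpl in Hg. lia.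
  - intros eps He. destruct (inv_small eps He) as [N HN]. exists N. intros k Hk.
    assert (dist (a (build (fun N k => g (N, k)) k)) < / INR (S k)).
    { destruct k; simpl; [apply (Hg (0,0)%nat)|apply (Hg (_, S k))]. }
    pose proof (inv_mono k N Hk). lra.
Qed.

Definition rconv (a : nat -> R) (l : R) :=
  forall eps, 0 < eps -> exists N, forall k, (N <= k)%nat -> Rabs (a k - l) < eps.

Lemma BW_sub (a : nat -> R) (B : R) : (forall m, Rabs (a m) <= B) ->
  exists phi l, sincr phi /\ rconv (fun k => a (phi k)) l.
Proof.
  intro HB.
  destruct (Bolzano_Weierstrass a (fun c => -B <= c <= B) (compact_P3 (-B) B)) as [l Hl].
  { intro n. specialize (HB n). revert HB; unfold Rabs; destruct Rcase_abs; lra. }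
  destruct (cluster_sub R (fun x => Rabs (x - l)) a) as [phi [H1 H2]].
  { intros eps He N. destruct (Hl (disc l (mkposreal eps He)) N) as [p Hp].
    - exists (mkposreal eps He). intros x Hx. exact Hx.
    - exists p. exact Hp. }
  exists phi, l. split; auto.
Qed.

Lemma rconv_sub a l phi : rconv a l -> sincr phi -> rconv (fun k => a (phi k)) l.
Proof.
  intros H Hp eps He. destruct (H eps He) as [N HN]. exists N. intros k Hk.
  apply HN. pose proof (sincr_ge phi Hp k). lia.
Qed.

Definition conv {V : NormedSpace} (s : nat -> V) (q : V) :=
  forall eps, 0 < eps -> exists N, forall k, (N <= k)%nat -> ns_norm (vsub (s k) q) < eps.

Lemma conv_sub (V : NormedSpace) (s : nat -> V) q phi : conv s q -> sincr phi -> conv (fun k => s (phi k)) q.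
Proof.
  intros H Hp eps He. destruct (H eps He) as [N HN]. exists N. intros k Hk.
  apply HN. pose proof (sincr_ge phi Hp k). lia.
Qed.

Definition span (V : NormedSpace) (n : nat) (e : nat -> V) (v : V) := exists c, v = lin_comb V n c e.

Lemma lc_ext (V : NormedSpace) n c c' e : (forall i, (i < n)%nat -> c i = c' i) ->
  lin_comb V n c e = lin_comb V n c' e.
Proof.
  induction n; intro H; simpl; auto. rewrite IHn by (intros; apply H; lia). rewrite H by lia. auto.
Qed.

Lemma lc_add (V : NormedSpace) n c c' e :
  ns_add (lin_comb V n c e) (lin_comb V n c' e) = lin_comb V n (fun i => c i + c' i) e.
Proof.
  induction n; simpl. apply ns_add_zero.
  rewrite add_swap4, IHn, ns_scal_distr_r. auto.
Qed.

Lemma lc_scal (V : NormedSpace) n a c e :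
  ns_scal a (lin_comb V n c e) = lin_comb V n (fun i => a * c i) e.
Proof.
  induction n; simpl. apply scal_zero.
  rewrite ns_scal_distr_l, IHn, ns_scal_assoc. auto.
Qed.

Lemma span_add V n e u v : span V n e u -> span V n e v -> span V n e (ns_add u v).
Proof. intros [c ->] [c' ->]. eexists. apply lc_add. Qed.

Lemma span_scal V n e a u : span V n e u -> span V n e (ns_scal a u).
Proof. intros [c ->]. eexists. apply lc_scal. Qed.

Lemma span_zero V n e : span V n e ns_zero.
Proof. exists (fun _ => 0). rewrite <- (scal0 V (lin_comb V n (fun _ => 0) e)), lc_scal.
  apply lc_ext. intros; ring. Qed.

Lemma span_S V n e v : span V n e v -> span V (S n) e v.
Proof.
  intros [c ->]. exists (fun i => if Nat.eqb i n then 0 else c i). simpl.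
  rewrite Nat.eqb_refl, scal0, ns_add_zero. apply lc_ext. intros i Hi.
  destruct (Nat.eqb_spec i n); [lia|auto].
Qed.

Lemma id_scal_sep (V : NormedSpace) (a : R) (e w : V) : a <> 0 ->
  ns_scal a (ns_add e (ns_scal (/ a) w)) = ns_add w (ns_scal a e).
Proof. intro. rewrite ns_scal_distr_l, scal_inv by auto. apply ns_add_comm. Qed.

Lemma id_add_opp (V : NormedSpace) (w s : V) : ns_add (ns_add w s) (ns_opp s) = w.
Proof. rewrite <- ns_add_assoc, ns_add_opp. apply ns_add_zero. Qed.

Lemma id_sub_add (V : NormedSpace) (x y z t : V) :
  vsub (ns_add x y) (ns_add z t) = ns_add (vsub x z) (vsub y t).
Proof. unfold vsub. rewrite opp_add. apply add_swap4. Qed.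

Lemma id_eg (V : NormedSpace) (e g q : V) : ns_add (ns_add e g) (vsub q g) = ns_add e q.
Proof. unfold vsub. rewrite add_swap4, ns_add_opp. apply ns_add_zero. Qed.

Lemma add_eq0 (V : NormedSpace) (x y : V) : ns_add x y = ns_zero -> x = ns_opp y.
Proof.
  intro H. rewrite <- (ns_add_zero V x), <- (ns_add_opp V y), ns_add_assoc, H. apply add0l.
Qed.

Lemma norm_add_opp_le (V : NormedSpace) (x y : V) : ns_norm (ns_add x (ns_opp y)) <= ns_norm x + ns_norm y.
Proof. rewrite <- (norm_opp V y). apply ns_norm_triangle. Qed.

Lemma CPT (V : NormedSpace) (e : nat -> V) (n : nat) : forall v : nat -> V,
  (forall m, span V n e (v m)) -> (exists B, forall m, ns_norm (v m) <= B) ->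
  exists phi q, sincr phi /\ span V n e q /\ conv (fun k => v (phi k)) q.
Proof.
  induction n as [|n IH]; intros v Hv [B HB].
  - exists (fun k => k), ns_zero. split; [intro k; lia|]. split; [apply span_zero|].
    intros eps He. exists O. intros k _. destruct (Hv k) as [c Hc]. simpl in Hc. rewrite Hc.
    rewrite vsub_self, norm0. lra.
  - destruct (choice _ Hv) as [C HC].
    set (w := fun m => lin_comb V n (C m) e). set (a := fun m => C m n).
    assert (Hvw : forall m, v m = ns_add (w m) (ns_scal (a m) (e n))) by (intro m; rewrite HC; reflexivity).
    assert (Hwspan : forall m, span V n e (w m)) by (intro m; exists (C m); reflexivity).
    assert (HB0 : 0 <= B) by (pose proof (ns_norm_nonneg V (v O)); pose proof (HB O); lra).
    destruct (classic (exists d, 0 < d /\ forall u, span V n e u -> d <= ns_norm (ns_add (e n) u)))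
      as [[d [Hd Hsep]] | Hns].
    + assert (Ha : forall m, Rabs (a m) <= B / d).
      { intro m. destruct (Req_dec (a m) 0) as [H0|H0].
        - rewrite H0, Rabs_R0. apply Rdiv_le_0_compat; lra.
        - pose proof (HB m) as Hm. rewrite Hvw, <- (id_scal_sep V (a m) (e n) (w m) H0), ns_norm_scal in Hm.
          pose proof (Hsep _ (span_scal V n e (/ a m) _ (Hwspan m))).
          pose proof (Rabs_pos (a m)).
          apply (Rmult_le_reg_r d); [lra|]. unfold Rdiv. rewrite Rmult_assoc, Rinv_l by lra. nra. }
      destruct (BW_sub a (B / d) Ha) as [phi [al [Hphi Hal]]].
      destruct (IH (fun k => w (phi k)) (fun k => Hwspan (phi k))) as [psi [q [Hpsi [[cq Hq] Hconv]]]].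
      { exists (B + B / d * ns_norm (e n)). intro k.
        rewrite <- (id_add_opp V (w (phi k)) (ns_scal (a (phi k)) (e n))), <- Hvw.
        eapply Rle_trans; [apply norm_add_opp_le|]. rewrite ns_norm_scal.
        pose proof (HB (phi k)). pose proof (Ha (phi k)). pose proof (ns_norm_nonneg V (e n)).
        apply Rplus_le_compat; auto. apply Rmult_le_compat_r; auto. }
      exists (fun k => phi (psi k)), (ns_add q (ns_scal al (e n))). split; [apply sincr_comp; auto|]. split.
      { exists (fun i => if Nat.eqb i n then al else cq i). simpl. rewrite Nat.eqb_refl, Hq. f_equal.
        apply lc_ext. intros i Hi. destruct (Nat.eqb_spec i n); [lia|auto]. }
      intros eps He. set (ne := ns_norm (e n)). assert (Hne : 0 <= ne) by apply ns_norm_nonneg.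
      destruct (Hconv (eps / 2) ltac:(lra)) as [N1 HN1].
      destruct (rconv_sub _ _ psi Hal Hpsi (eps / (2 * (ne + 1)))) as [N2 HN2].
      { apply Rdiv_lt_0_compat; lra. }
      exists (Nat.max N1 N2). intros k Hk. simpl.
      rewrite Hvw, id_sub_add, scal_sub_l.
      eapply Rle_lt_trans; [apply ns_norm_triangle|]. rewrite ns_norm_scal.
      specialize (HN1 k ltac:(lia)). specialize (HN2 k ltac:(lia)). simpl in HN1, HN2. fold ne.
      assert (Rabs (a (phi (psi k)) - al) * ne <= eps / (2 * (ne + 1)) * ne)
        by (apply Rmult_le_compat_r; lra).
      assert (eps / (2 * (ne + 1)) * ne <= eps / 2).
      { apply (Rmult_le_reg_r (2 * (ne + 1))); [lra|]. field_simplify; nra. }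
      lra.
    + assert (Hg : forall k : nat, exists g, span V n e g /\ ns_norm (ns_add (e n) g) < / INR (S k)).
      { intro k. apply NNPP. intro Hno. apply Hns. exists (/ INR (S k)). split.
        - apply Rinv_0_lt_compat, lt_0_INR; lia.
        - intros u Hu. apply Rnot_lt_le. intro Hlt. apply Hno. exists u. auto. }
      destruct (choice _ Hg) as [G HG].
      assert (HGs : forall k, span V n e (G k)) by (intro k; destruct (HG k); auto).
      destruct (IH G HGs) as [psi [q [Hpsi [Hq Hconv]]]].
      { exists (ns_norm (e n) + 1). intro k.
        rewrite <- (id_add_opp V (G k) (e n)), (ns_add_comm _ (G k) (e n)).
        eapply Rle_trans; [apply norm_add_opp_le|].
        destruct (HG k) as [_ H1]. assert (/ INR (S k) <= 1).
        { pose proof (inv_mono k O ltac:(lia)). simpl in H. rewrite Rinv_1 in H. auto. }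
        lra. }
      assert (Heq : ns_norm (ns_add (e n) q) = 0).
      { pose proof (ns_norm_nonneg V (ns_add (e n) q)).
        destruct (Rle_lt_or_eq_dec _ _ H) as [Hp|]; [|auto]. exfalso.
        set (eps := ns_norm (ns_add (e n) q)) in *.
        destruct (Hconv (eps / 2) ltac:(lra)) as [N1 HN1].
        destruct (inv_small (eps / 2) ltac:(lra)) as [N2 HN2].
        set (k := Nat.max N1 N2). specialize (HN1 k ltac:(unfold k; lia)). simpl in HN1.
        destruct (HG (psi k)) as [_ H2].
        pose proof (inv_mono (psi k) N2 ltac:(pose proof (sincr_ge psi Hpsi k); unfold k in *; lia)).
        pose proof (ns_norm_triangle V (ns_add (e n) (G (psi k))) (vsub q (G (psi k)))) as H3.
        rewrite id_eg, norm_vsub_sym in H3. fold eps in H3. lra. }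
      apply ns_norm_eq0, add_eq0 in Heq. rewrite opp_scal in Heq.
      destruct (IH v) as [psi' [q' [Hpsi' [Hq' Hconv']]]].
      { intro m. rewrite Hvw, Heq. apply span_add; auto. apply span_scal, span_scal; auto. }
      { exists B; auto. }
      exists psi', q'. split; auto. split; auto. apply span_S; auto.
Qed.

Fixpoint lst {X : Type} (g : list X -> X) (n : nat) : list X :=
  match n with O => nil | S n' => g (lst g n') :: lst g n' end.

Lemma inf_seq (X : Type) : ~ finite_type X -> exists x : nat -> X, forall m n, x m = x n -> m = n.
Proof.
  intro Hinf.
  assert (H : forall l : list X, exists z, ~ In z l).
  { intro l. apply NNPP. intro Hno. apply Hinf. exists l. intro z. apply NNPP. intro Hz. apply Hno. eauto. }
  destruct (choice _ H) as [g Hg].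
  exists (fun n => g (lst g n)).
  assert (Hin : forall m n, (m < n)%nat -> In (g (lst g m)) (lst g n)).
  { intros m n Hmn. induction Hmn; simpl; auto. }
  intros m n Heq. destruct (Nat.lt_trichotomy m n) as [Hlt|[Heq'|Hlt]]; auto.
  - exfalso. apply (Hg (lst g n)). rewrite <- Heq. apply Hin; auto.
  - exfalso. apply (Hg (lst g m)). rewrite Heq. apply Hin; auto.
Qed.

Lemma sincr_inj phi : sincr phi -> forall k k', phi k = phi k' -> k = k'.
Proof.
  intros H k k' E. destruct (Nat.lt_trichotomy k k') as [Hl|[|Hl]]; auto;
  pose proof (sincr_mono phi H _ _ Hl); lia.
Qed.

Lemma norm_dir (V : NormedSpace) (w : V) : ns_norm (ns_scal (/ ns_norm w) w) <= 1.
Proof.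
  rewrite ns_norm_scal. pose proof (ns_norm_nonneg V w).
  destruct (Req_dec (ns_norm w) 0) as [E|E].
  - rewrite E. lra.
  - rewrite Rabs_right by (left; apply Rinv_0_lt_compat; lra). rewrite Rinv_l by auto. lra.
Qed.

Lemma norm_dir1 (V : NormedSpace) (w : V) : ns_norm w <> 0 -> ns_norm (ns_scal (/ ns_norm w) w) = 1.
Proof.
  intro E. rewrite ns_norm_scal. pose proof (ns_norm_nonneg V w).
  rewrite Rabs_right by (left; apply Rinv_0_lt_compat; lra). rewrite Rinv_l by auto. lra.
Qed.

Lemma scal_dir (V : NormedSpace) (w : V) : ns_norm w <> 0 -> ns_scal (ns_norm w) (ns_scal (/ ns_norm w) w) = w.
Proof. intro. apply scal_inv; auto. Qed.

Lemma unbounded_case (h : R -> R) (X : Type) (d : X -> X -> R) (V : NormedSpace) (f : X -> V)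
  (n : nat) (e : nat -> V) (x : nat -> X) :
  snowflaking h -> is_metric X d -> (forall v, span V n e v) ->
  (forall a b, ns_norm (vsub (f a) (f b)) = h (d a b)) ->
  (forall B, exists m, B < ns_norm (vsub (f (x m)) (f (x O)))) -> False.
Proof.
  intros Hs Hd He Hiso Hunb.
  pose proof Hs as [Hnn [H0 [_ [_ H4]]]].
  destruct Hd as [Hd0 [Hdeq [Hdsym Hdtri]]].
  set (y := fun m => f (x m)).
  set (r := fun m => ns_norm (vsub (y m) (y O))).
  destruct (choice (fun k m => INR k < r m) (fun k => Hunb (INR k))) as [psi Hpsi].
  set (u := fun k => ns_scal (/ r (psi k)) (vsub (y (psi k)) (y O))).
  assert (Hrpos : forall k, 0 < r (psi k)) by (intro k; pose proof (pos_INR k); pose proof (Hpsi k); lra).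
  assert (Hu1 : forall k, ns_norm (u k) = 1) by (intro k; apply norm_dir1; pose proof (Hrpos k); unfold r in *; lra).
  assert (Hus : forall k, ns_scal (r (psi k)) (u k) = vsub (y (psi k)) (y O))
    by (intro k; apply scal_dir; pose proof (Hrpos k); unfold r in *; lra).
  destruct (CPT V e n u (fun k => He _)) as [phi [uinf [Hphi [_ Hconv]]]].
  { exists 1. intro k. rewrite Hu1. lra. }
  destruct (Hconv (1/4) ltac:(lra)) as [N HN].
  set (i := psi (phi N)). set (ri := r i). set (d0 := d (x i) (x O)).
  assert (Hri : 0 < ri) by apply Hrpos.
  assert (Hd0p : 0 <= d0) by apply Hd0.
  set (eps := ri / (2 * (d0 + 1))).
  destruct (H4 eps ltac:(unfold eps; apply Rdiv_lt_0_compat; lra)) as [T HT].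
  set (T' := Rmax T 1).
  assert (HT' : T <= T' /\ 1 <= T') by (unfold T'; split; [apply Rmax_l|apply Rmax_r]).
  destruct (INR_archimed 1 (ri + h T') ltac:(lra)) as [M HM]. rewrite Rmult_1_r in HM.
  set (m := Nat.max N M). set (j := psi (phi m)). set (rj := r j).
  assert (Hrj : ri + h T' < rj).
  { pose proof (Hpsi (phi m)). pose proof (sincr_ge phi Hphi m).
    assert (INR M <= INR (phi m)) by (apply le_INR; unfold m in *; lia). unfold rj, j. lra. }
  assert (HhT : 0 <= h T') by (apply Hnn; lra).
  assert (Huij : ns_norm (vsub (u (phi m)) (u (phi N))) < 1/2).
  { pose proof (vdist_tri V (u (phi m)) uinf (u (phi N))).
    pose proof (HN m ltac:(unfold m; lia)). pose proof (HN N ltac:(lia)). simpl in *.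
    rewrite (norm_vsub_sym V uinf) in H. lra. }
  set (C := ns_norm (vsub (y j) (y i))).
  assert (HC1 : C <= rj - ri / 2).
  { unfold C. rewrite <- (vsub_sub V (y j) (y i) (y O)).
    fold (r j) (r i). unfold j, i. rewrite <- !Hus.
    eapply Rle_trans; [apply dir_est; [apply Hu1|fold i j; fold (r i) (r j); fold ri rj; lra]|].
    fold i j; fold (r i) (r j); fold ri rj.
    assert (ri * ns_norm (vsub (u (phi m)) (u (phi N))) <= ri * (1/2)) by (apply Rmult_le_compat_l; lra).
    lra. }
  assert (HC2 : rj - ri <= C) by (unfold C, rj, ri, r; apply norm_ge_rev).
  set (dji := d (x j) (x i)).
  assert (HC3 : C = h dji) by apply Hiso.
  assert (Hdji : T' < dji).
  { apply Rnot_le_lt. intro Hle. pose proof (h_mono h Hs dji T' (Hd0 _ _) Hle). lra. }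
  assert (Hq : Rabs (h dji / dji) < eps) by (apply HT; lra).
  assert (Hq0 : 0 <= h dji / dji) by (apply Rdiv_le_0_compat; [apply Hnn|]; lra).
  rewrite Rabs_right in Hq by lra.
  assert (Hrj2 : rj = h (d (x j) (x O))) by apply Hiso.
  pose proof (Hdtri (x j) (x i) (x O)) as Htri. fold dji d0 in Htri.
  pose proof (h_mono h Hs _ _ (Hd0 _ _) Htri).
  pose proof (h_chord h Hs dji d0 ltac:(lra) Hd0p).
  assert (d0 * (h dji / dji) <= d0 * eps) by (apply Rmult_le_compat_l; lra).
  assert (d0 * eps < ri / 2).
  { unfold eps. apply (Rmult_lt_reg_r (2 * (d0 + 1))); [lra|]. field_simplify; [|lra]. nra. }
  rewrite <- HC3 in *. lra.
Qed.

Lemma bounded_case (h : R -> R) (X : Type) (d : X -> X -> R) (V : NormedSpace) (f : X -> V)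
  (n : nat) (e : nat -> V) (x : nat -> X) :
  snowflaking h -> is_metric X d -> (forall v, span V n e v) ->
  (forall a b, ns_norm (vsub (f a) (f b)) = h (d a b)) ->
  (forall m m', x m = x m' -> m = m') ->
  (exists B, forall m, ns_norm (f (x m)) <= B) -> False.
Proof.
  intros Hs Hd He Hiso Hxinj Hbd.
  pose proof Hs as [Hnn [H0 [_ [H3 _]]]].
  destruct Hd as [Hd0 [Hdeq [Hdsym Hdtri]]].
  assert (Hdpos : forall a b, f a <> f b -> 0 < d a b).
  { intros a b Hab. destruct (Hd0 a b) as [|E]; auto. exfalso. apply Hab. apply vsub_eq0.
    rewrite Hiso, <- E. auto. }
  assert (Hfinj : forall a b, a <> b -> f a <> f b).
  { intros a b Hab E. assert (0 < d a b).
    { destruct (Hd0 a b) as [|E2]; auto. exfalso. apply Hab. apply Hdeq. auto. }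
    pose proof (h_pos h Hs _ H). rewrite <- Hiso, E, vsub_self, norm0 in H1. lra. }
  destruct (CPT V e n (fun m => f (x m)) (fun m => He _) Hbd) as [phi1 [p [Hphi1 [_ Hconv1]]]].
  set (R0 := fun k => ns_norm (vsub (f (x (phi1 k))) p)).
  set (u := fun k => ns_scal (/ R0 k) (vsub (f (x (phi1 k))) p)).
  destruct (CPT V e n u (fun k => He _)) as [phi2 [uinf [Hphi2 [_ Hconv2]]]].
  { exists 1. intro k. apply norm_dir. }
  set (xs := fun k => x (phi1 (phi2 k))).
  set (Z := fun k => f (xs k)).
  set (Rk := fun k => ns_norm (vsub (Z k) p)).
  set (U := fun k => u (phi2 k)).
  assert (HRk : forall eps, 0 < eps -> exists N, forall k, (N <= k)%nat -> Rk k < eps).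
  { intros eps Heps. destruct (conv_sub V _ p phi2 Hconv1 Hphi2 eps Heps) as [N HN]. exists N. exact HN. }
  assert (HU : forall eps, 0 < eps -> exists N, forall k, (N <= k)%nat -> ns_norm (vsub (U k) uinf) < eps)
    by exact Hconv2.
  assert (HZinj : forall k k', k <> k' -> Z k <> Z k').
  { intros k k' Hk. apply Hfinj. intro E. apply Hxinj in E. apply sincr_inj in E; auto.
    apply sincr_inj in E; auto. }
  assert (HRpos : forall k, Z k <> p -> 0 < Rk k).
  { intros k Hk. pose proof (ns_norm_nonneg V (vsub (Z k) p)). destruct H; auto.
    exfalso. apply Hk. apply vsub_eq0. auto. }
  assert (HP : forall N, exists k, (N <= k)%nat /\ 0 < Rk k).
  { intro N. destruct (classic (Z N = p)) as [E|E].
    - exists (S N). split; [lia|]. apply HRpos. intro E2. apply (HZinj N (S N)); [lia|]. congruence.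
    - exists N. split; [lia|apply HRpos; auto]. }
  assert (HUdef : forall k, U k = ns_scal (/ ns_norm (vsub (Z k) p)) (vsub (Z k) p)) by reflexivity.
  assert (HU1 : forall k, 0 < Rk k -> ns_norm (U k) = 1).
  { intros k Hk. rewrite HUdef. apply norm_dir1. unfold Rk in Hk. lra. }
  assert (HUs : forall k, 0 < Rk k -> ns_scal (Rk k) (U k) = vsub (Z k) p).
  { intros k Hk. rewrite HUdef. apply scal_dir. unfold Rk in Hk. lra. }
  assert (HRk0 : forall k, 0 <= Rk k) by (intro; apply ns_norm_nonneg).
  destruct (HU (1/4) ltac:(lra)) as [N0 HN0].
  destruct (HP N0) as [i [Hi Hri]]. set (ri := Rk i) in *.
  destruct (classic (exists t0, 0 < t0 /\ h t0 < ri / 2)) as [[t0 [Ht0 Ht0h]] | Hno].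
  2:{ destruct (HRk (ri / 4) ltac:(lra)) as [N1 HN1].
      pose proof (HN1 N1 ltac:(lia)) as Ha1. pose proof (HN1 (S N1) ltac:(lia)) as Ha2.
      assert (Hne : Z N1 <> Z (S N1)) by (apply HZinj; lia).
      pose proof (Hdpos _ _ Hne) as Hdp.
      assert (Hb : ri / 2 <= h (d (xs N1) (xs (S N1)))).
      { apply Rnot_lt_le. intro Hlt. apply Hno. eauto. }
      rewrite <- Hiso in Hb. fold (Z N1) (Z (S N1)) in Hb.
      pose proof (vdist_tri V (Z N1) p (Z (S N1))) as Ht. rewrite (norm_vsub_sym V p) in Ht.
      fold (Rk N1) (Rk (S N1)) in Ht. lra. }
  set (K := h t0 / t0).
  assert (HK0 : 0 <= K) by (apply Rdiv_le_0_compat; [apply Hnn|]; lra).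
  set (M := 8 * K + 1).
  destruct (H3 M) as [dl [Hdl HdM]].
  assert (Hhd : 0 < h (dl / 2)) by (apply h_pos; auto; lra).
  set (eta := Rmin (ri / 2) (h (dl / 2) / 2)).
  assert (Heta : 0 < eta /\ eta <= ri / 2 /\ eta <= h (dl / 2) / 2).
  { unfold eta, Rmin. destruct Rle_dec; lra. }
  destruct (HRk eta ltac:(lra)) as [N2 HN2].
  destruct (HP (Nat.max N2 N0)) as [j [Hj Hrj]]. set (rj := Rk j) in *.
  assert (Hrjs : rj < eta) by (apply HN2; lia).
  destruct (HRk (rj / 4) ltac:(lra)) as [N3 HN3].
  set (k := N3). assert (Hrk : Rk k < rj / 4) by (apply HN3; unfold k; lia). set (rk := Rk k) in *.
  assert (Hij : Z i <> Z j) by (intro E; unfold ri, rj, Rk in *; rewrite E in *; lra).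
  assert (Hjk : Z j <> Z k) by (intro E; unfold rk, rj, Rk in *; rewrite E in *; lra).
  set (dij := d (xs i) (xs j)). set (djk := d (xs j) (xs k)). set (dik := d (xs i) (xs k)).
  assert (Hdij : 0 < dij) by (apply Hdpos; auto).
  assert (Hdjk : 0 < djk) by (apply Hdpos; auto).
  set (A := ns_norm (vsub (Z i) (Z k))). set (B := ns_norm (vsub (Z i) (Z j))).
  set (C := ns_norm (vsub (Z j) (Z k))).
  assert (HA : A = h dik) by apply Hiso.
  assert (HB : B = h dij) by apply Hiso.
  assert (HC : C = h djk) by apply Hiso.
  assert (HA1 : ri - rk <= A) by (apply norm_ge_rev).
  assert (HUij : ns_norm (vsub (U i) (U j)) < 1/2).
  { pose proof (vdist_tri V (U i) uinf (U j)). pose proof (HN0 i Hi). pose proof (HN0 j ltac:(lia)).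
    rewrite (norm_vsub_sym V uinf) in H. lra. }
  assert (HB1 : B <= ri - rj / 2).
  { unfold B. rewrite <- (vsub_sub V (Z i) (Z j) p). fold (Rk i) (Rk j). rewrite <- (HUs i Hri), <- (HUs j Hrj).
    fold ri rj.
    eapply Rle_trans; [apply dir_est; [apply HU1; auto|lra]|].
    assert (rj * ns_norm (vsub (U i) (U j)) <= rj * (1/2)) by (apply Rmult_le_compat_l; lra). lra. }
  assert (HB2 : ri - rj <= B).
  { unfold B. pose proof (norm_ge_rev V (Z i) (Z j) p). fold (Rk i) (Rk j) in H. fold ri rj in H. lra. }
  assert (HC1 : C <= rj + rk).
  { unfold C. pose proof (vdist_tri V (Z j) p (Z k)). rewrite (norm_vsub_sym V p) in H. fold (Rk j) (Rk k) in H. fold rj rk in H. lra. }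
  assert (Hdt : t0 < dij).
  { apply Rnot_le_lt. intro Hle. pose proof (h_mono h Hs dij t0 (Hd0 _ _) Hle). lra. }
  assert (HBK : h dij / dij <= K) by (apply h_ratio_div; auto; lra).
  assert (Hds : djk < dl / 2).
  { apply Rnot_le_lt. intro Hle. pose proof (h_mono h Hs (dl / 2) djk ltac:(lra) Hle). lra. }
  assert (HM : M < h djk / djk) by (apply HdM; lra).
  assert (HMd : M * djk < C).
  { rewrite HC. apply (Rmult_lt_compat_r djk) in HM; auto. unfold Rdiv in HM.
    rewrite Rmult_assoc, Rinv_l in HM by lra. lra. }
  pose proof (Hdtri (xs i) (xs j) (xs k)) as Htri. fold dij djk dik in Htri.
  pose proof (h_mono h Hs _ _ (Hd0 _ _) Htri).
  pose proof (h_chord h Hs dij djk Hdij ltac:(lra)).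
  assert (djk * (h dij / dij) <= djk * K) by (apply Rmult_le_compat_l; lra).
  assert (HAB : A <= B + djk * K) by (rewrite HA, HB; fold dik in H; lra).
  unfold M in HMd.
  assert (rj / 4 < djk * K) by lra.
  assert (8 * (djk * K) + djk < 5 * rj / 4) by lra.
  lra.
Qed.

Lemma add_vsub (V : NormedSpace) (a b : V) : ns_add (vsub a b) b = a.
Proof. unfold vsub. rewrite <- ns_add_assoc, (ns_add_comm _ (ns_opp b) b), ns_add_opp. apply ns_add_zero. Qed.

Theorem theorem1p2 (h : R -> R) (X : Type) (d : X -> X -> R) :
  snowflaking h ->
  is_metric X d ->
  (exists (V : NormedSpace) (f : X -> V),
      finite_dimensional V /\ isometric_embedding X (fun x y => h (d x y)) V f) ->
  finite_type X.
Proof.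
  intros Hs Hd [V [f [[n [e He]] Hiso]]].
  apply NNPP; intro Hinf. destruct (inf_seq X Hinf) as [x Hx].
  assert (He' : forall v, span V n e v) by (intro v; destruct (He v) as [c Hc]; exists c; auto).
  assert (Hiso' : forall a b, ns_norm (vsub (f a) (f b)) = h (d a b)) by (intros; apply Hiso).
  destruct (classic (exists B, forall m, ns_norm (f (x m)) <= B)) as [Hb|Hub].
  - exact (bounded_case h X d V f n e x Hs Hd He' Hiso' Hx Hb).
  - apply (unbounded_case h X d V f n e x Hs Hd He' Hiso'). intro B. apply NNPP. intro Hno. apply Hub.
    exists (B + ns_norm (f (x O))). intro m.
    assert (ns_norm (vsub (f (x m)) (f (x O))) <= B) by (apply Rnot_lt_le; intro; apply Hno; eauto).
    rewrite <- (add_vsub V (f (x m)) (f (x O))).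
    pose proof (ns_norm_triangle V (vsub (f (x m)) (f (x O))) (f (x O))). lra.
Qed.
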